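(* Let $G$ be a DAG with maximum in-degree $\Delta_{in}$, and let $k,g,r$ be positive integers with $r\ge\Delta_{in}+1$. Let $\sigma=(T_1,\dots,T_s)$ be a non-idle greedy schedule of $G$ on $k$ processors. Consider the MPP pebbling strategy that, for $t=1,\dots,s$ in order, assigns the (at most $k$) nodes of $T_t$ to distinct processors and, for each such node $v$ on processor $p$: loads all in-neighbors of $v$ from slow memory into $p$ (via (R2) steps, in parallel across processors), computes $v$ on $p$ (one parallel (R3) step for all of $T_t$), saves $v$ to slow memory (one parallel (R1) step), and then deletes all red pebbles. The cost of this strategy is at most $2\cdot\bigl(g\cdot(\Delta_{in}+1)+1\bigr)\cdot\mathrm{OPT}$.
   Context: Multiprocessor red-blue pebbling (MPP). Input: a DAG $G=(V,E)$ with $n=|V|$ and positive integers $k$ (number of processors), $r$ (fast-memory size per processor), $g$ (cost of an I/O step). $\Delta_{in}$ denotes the maximum in-degree of $G$; sources/sinks are nodes of in-degree/out-degree $0$. A configuration is a tuple $(R^1,\dots,R^k,B)$ of subsets of $V$ ($R^j$ = nodes carrying a red pebble of processor $j$, $B$ = nodes carrying a blue pebble); it is valid if $|R^j|\le r$ for all $j$. The initial configuration has all sets empty; a configuration is terminal if every sink lies in $B\cup\bigcup_j R^j$. The transition rules are: (R1) for some $m\le k$, pairwise distinct processors $j_1,\dots,j_m$ and nodes $v_1,\dots,v_m$ with $v_i\in R^{j_i}$, add each $v_i$ to $B$ (cost $g$); (R2) for some $m\le k$, pairwise distinct processors $j_1,\dots,j_m$ and nodes $v_1,\dots,v_m\in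 B$, add each $v_i$ to $R^{j_i}$ (cost $g$); (R3) for some $m\le k$, pairwise distinct processors $j_1,\dots,j_m$ and nodes $v_1,\dots,v_m$ such that every in-neighbor of $v_i$ lies in $R^{j_i}$, add each $v_i$ to $R^{j_i}$ (cost $1$); (R4) remove a single red or blue pebble (cost $0$). A pebbling strategy is a sequence of valid configurations starting at the initial configuration and ending at a terminal one, each obtained from its predecessor by one rule; its cost is the sum of the costs of the rules applied. $\mathrm{OPT}$ denotes the minimum cost of a pebbling strategy. Applications of (R1),(R2) are called I/O steps and applications of (R3) compute steps. A non-idle greedy schedule of $G$ on $k$ processors is a partition of $V$ into nonempty sets $T_1,\dots,T_s$ with $|T_t|\le k$ such that every in-neighbor of a node in $T_t$ lies in $T_1\cup\dots\cup T_{t-1}$, and such that for every $t$ with $|T_t|<k$, every node not in $T_1\cup\dots\cup T_{t-1}$ all of whose in-neighbors lie in $T_1\cup\dots\cup T_{t-1}$ belongs to $T_t$. *)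

(* Defs.v *)
From mathcomp Require Import all_boot.
Set Implicit Arguments.
Unset Strict Implicit.
Unset Printing Implicit Defensive.

Definition in_nbrs (V : finType) (E : rel V) (v : V) : {set V} :=
  [set u | E u v].

Definition indeg (V : finType) (E : rel V) (v : V) : nat := #|in_nbrs E v|.

Definition max_indeg (V : finType) (E : rel V) : nat := \max_(v : V) indeg E v.

Definition acyclic (V : finType) (E : rel V) : Prop :=
  forall (v : V) (p : seq V), path E v p -> last v p = v -> p = [::].

Definition is_sink (V : finType) (E : rel V) (v : V) : bool :=
  [forall w, ~~ E v w].

(* configuration (R^1..R^k, B); processors are 'I_k *)
Definition config (V : finType) (k : nat) : Type :=
  ({ffun 'I_k -> {set V}} * {set V})%type.

Definition init_config (V : finType) (k : nat) : config V k :=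
  ([ffun => set0], set0).

Definition valid_config (V : finType) (k r : nat) (c : config V k) : bool :=
  [forall j, #|c.1 j| <= r].

Definition terminal (V : finType) (E : rel V) (k : nat) (c : config V k) : bool :=
  [forall v, is_sink E v ==>
     ((v \in c.2) || [exists j, v \in c.1 j])].

(* Rule applications.  A list of (processor, node) pairs encodes the
   parallel application of (R1), (R2), (R3) with m = size of the list. *)
Inductive move (V : finType) (k : nat) : Type :=
  | SaveR1 of seq ('I_k * V)
  | LoadR2 of seq ('I_k * V)
  | CompR3 of seq ('I_k * V)
  | DelRedR4 of 'I_k & V
  | DelBlueR4 of V.

Definition move_cost (V : finType) (k g : nat) (m : move V k) : nat :=
  match m with
  | SaveR1 _ => g
  | LoadR2 _ => g
  | CompR3 _ => 1
  | DelRedR4 _ _ => 0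
  | DelBlueR4 _ => 0
  end.

Definition add_red (V : finType) (k : nat) (R : {ffun 'I_k -> {set V}})
  (l : seq ('I_k * V)) : {ffun 'I_k -> {set V}} :=
  [ffun j => R j :|: [set v | (j, v) \in l]].

Definition step (V : finType) (E : rel V) (k : nat) (c : config V k)
  (m : move V k) : option (config V k) :=
  let: (R, B) := c in
  match m with
  | SaveR1 l =>
      if uniq (map fst l) && all (fun p => p.2 \in R p.1) l
      then Some (R, B :|: [set v | v \in map snd l]) else None
  | LoadR2 l =>
      if uniq (map fst l) && all (fun p => p.2 \in B) l
      then Some (add_red R l, B) else None
  | CompR3 l =>
      if uniq (map fst l) && all (fun p => in_nbrs E p.2 \subset R p.1) l
      then Some (add_red R l, B) else None
  | DelRedR4 j v =>
      if v \in R j then Some ([ffun i => if i == j then R i :\ v else R i], B)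
      else None
  | DelBlueR4 v =>
      if v \in B then Some (R, B :\ v) else None
  end.

Fixpoint run (V : finType) (E : rel V) (k r : nat) (c : config V k)
  (s : seq (move V k)) : option (config V k) :=
  match s with
  | [::] => Some c
  | m :: s' =>
      match step E c m with
      | Some c' => if valid_config r c' then run E r c' s' else None
      | None => None
      end
  end.

Definition pebbling_strategy (V : finType) (E : rel V) (k r : nat)
  (s : seq (move V k)) : bool :=
  match run E r (init_config V k) s with
  | Some c => terminal E c
  | None => false
  end.

Definition strategy_cost (V : finType) (k g : nat) (s : seq (move V k)) : nat :=
  \sum_(m <- s) move_cost g m.

(* Non-idle greedy schedules: T = [:: T_1; ...; T_s] (0-indexed here)  *)

Definition sched_before (V : finType) (T : seq {set V}) (t : nat) : {set V} :=
  \bigcup_(i < t) nth set0 T i.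

Definition non_idle_greedy_schedule (V : finType) (E : rel V) (k : nat)
  (T : seq {set V}) : Prop :=
  (forall v : V, exists2 t, t < size T & v \in nth set0 T t) /\
  (forall t1 t2, t1 < size T -> t2 < size T -> t1 != t2 ->
     [disjoint nth set0 T t1 & nth set0 T t2]) /\
  (forall t, t < size T -> nth set0 T t != set0) /\
  (forall t, t < size T -> #|nth set0 T t| <= k) /\
  (forall t, t < size T -> forall v, v \in nth set0 T t ->
     in_nbrs E v \subset sched_before T t) /\
  (forall t, t < size T -> #|nth set0 T t| < k ->
     forall v, v \notin sched_before T t ->
       in_nbrs E v \subset sched_before T t -> v \in nth set0 T t).

(* The strategy induced by a schedule T and a processor assignment asg
   (asg t maps the nodes of T_t injectively to processors).            *)

Definition greedy_phase (V : finType) (E : rel V) (k : nat)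
  (T : seq {set V}) (asg : nat -> V -> 'I_k) (t : nat) : seq (move V k) :=
  let Tt := nth set0 T t in
  let L := enum Tt in
  let d := \max_(v in Tt) indeg E v in
  (* parallel loading of in-neighbours: in round j, every processor loads
     the j-th in-neighbour of its node (if any) *)
  [seq LoadR2 [seq (asg t v, nth v (enum (in_nbrs E v)) j)
            | v <- L & j < indeg E v] | j <- iota 0 d]
  ++ [:: CompR3 [seq (asg t v, v) | v <- L];
         SaveR1 [seq (asg t v, v) | v <- L]]
  ++ flatten [seq [seq DelRedR4 (asg t v) u | u <- enum (v |: in_nbrs E v)]
             | v <- L].

Definition greedy_strategy (V : finType) (E : rel V) (k : nat)
  (T : seq {set V}) (asg : nat -> V -> 'I_k) : seq (move V k) :=
  flatten [seq greedy_phase E T asg t | t <- iota 0 (size T)].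

(* Main.v *)
Require Import Defs.
From mathcomp Require Import all_boot zify.
Set Implicit Arguments.
Unset Strict Implicit.
Unset Printing Implicit Defensive.

Lemma run_cat (V : finType) (E : rel V) (k r : nat) (c : config V k) s1 s2 :
  run E r c (s1 ++ s2) =
  match run E r c s1 with Some c' => run E r c' s2 | None => None end.
Proof.
elim: s1 c => [|m s1 IH] c //=.
case: (step E c m) => [c'|] //. by case: ifP.
Qed.

Lemma del_run (V : finType) (E : rel V) (k r : nat) (j : 'I_k) (us : seq V)
   (R : {ffun 'I_k -> {set V}}) (B : {set V}) :
  uniq us -> {subset us <= R j} -> valid_config r (R, B) ->
  run E r (R, B) [seq DelRedR4 j u | u <- us] =
  Some ([ffun i => if i == j then R i :\: [set x in us] else R i], B).
Proof.
elim: us R => [|u us IH] R /=.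
  move=> _ _ _; congr (Some (_, _)); apply/ffunP => i; rewrite ffunE.
  case: eqP => // ->; apply/setP => x; rewrite !inE; by case: (x \in R j).
move=> /andP[uus uq] sub val.
rewrite (sub u (mem_head _ _)).
have val' : valid_config r ([ffun i => if i == j then R i :\ u else R i], B).
  apply/forallP => i; rewrite ffunE; move/forallP: val => /(_ i) /=.
  case: eqP => // _; apply: leq_trans; apply: subset_leq_card; apply: subsetDl.
rewrite val' IH //.
- congr (Some (_, _)); apply/ffunP => i; rewrite !ffunE.
  case: eqP => // _; apply/setP => x; rewrite !inE.
  by case: (x == u); case: (x \in us); case: (x \in R i).
- move=> x xus; rewrite ffunE eqxx !inE (sub x) ?andbT; last by rewrite inE xus orbT.
  by apply/eqP => exu; rewrite -exu xus in uus.
Qed.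

Definition Rload (V : finType) (E : rel V) (k : nat) (Tt : {set V}) (a : V -> 'I_k)
  (j : nat) : {ffun 'I_k -> {set V}} :=
  [ffun p => [set u | [exists v in Tt, (a v == p) && (u \in in_nbrs E v)
                          && (index u (enum (in_nbrs E v)) < j)]]].

Definition Rfin (V : finType) (E : rel V) (k : nat) (a : V -> 'I_k) (X : seq V)
  : {ffun 'I_k -> {set V}} :=
  [ffun p => [set u | has (fun v => (a v == p) && (u \in v |: in_nbrs E v)) X]].

Lemma indeg_le (V : finType) (E : rel V) v : indeg E v <= max_indeg E.
Proof. by rewrite /max_indeg (bigD1 v) //= leq_maxl. Qed.

Lemma card_proc (V : finType) (E : rel V) (k r : nat) (Tt : {set V}) (a : V -> 'I_k)
  (S : {set V}) p :
  {in Tt &, injective a} -> max_indeg E + 1 <= r ->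
  (forall u, u \in S -> exists2 v, v \in Tt & (a v = p) /\ u \in v |: in_nbrs E v) ->
  #|S| <= r.
Proof.
move=> inj hr H.
case: (set_0Vmem S) => [->|[u0 Hu0]]; first by rewrite cards0.
have [v0 Hv0 [Ha0 _]] := H u0 Hu0.
have sub: S \subset v0 |: in_nbrs E v0.
  apply/subsetP => u Hu; have [v Hv [Ha Hu']] := H u Hu.
  have ev : v = v0 by apply: inj => //; congruence.
  by rewrite -ev.
apply: leq_trans (subset_leq_card sub) _.
rewrite cardsU1; have := indeg_le E v0; rewrite /indeg.
case: (v0 \notin _) => /=; lia.
Qed.


Lemma valid_Rload (V : finType) (E : rel V) (k r : nat) (Tt : {set V}) (a : V -> 'I_k) B j :
  {in Tt &, injective a} -> max_indeg E + 1 <= r ->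
  valid_config r (Rload E Tt a j, B).
Proof.
move=> inj hr; apply/forallP => p /=; apply: (card_proc (p:=p) inj hr) => u.
rewrite /Rload ffunE inE => /existsP [v /andP [vT /andP [/andP [/eqP av uin] _]]].
by exists v => //; split => //; rewrite inE uin orbT.
Qed.

Lemma valid_Rfin (V : finType) (E : rel V) (k r : nat) (Tt : {set V}) (a : V -> 'I_k) B X :
  {in Tt &, injective a} -> max_indeg E + 1 <= r -> {subset X <= Tt} ->
  valid_config r (Rfin E a X, B).
Proof.
move=> inj hr sub; apply/forallP => p /=; apply: (card_proc (p:=p) inj hr) => u.
rewrite /Rfin ffunE inE => /hasP [v vX /andP [/eqP av uin]].
by exists v => //; apply: sub.
Qed.

Lemma add_red_load (V : finType) (E : rel V) (k : nat) (Tt : {set V}) (a : V -> 'I_k) j :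
  add_red (Rload E Tt a j)
    [seq (a v, nth v (enum (in_nbrs E v)) j) | v <- enum Tt & j < indeg E v]
  = Rload E Tt a j.+1.
Proof.
apply/ffunP => p; rewrite /add_red /Rload !ffunE; apply/setP => u; rewrite !inE.
apply/idP/existsP.
- case/orP => [/existsP [v /andP [vT /andP [/andP [av uin] idx]]]|].
    by exists v; rewrite vT av uin /=; apply: ltnW.
  case/mapP => v; rewrite mem_filter mem_enum => /andP [jv vT] [-> ->].
  exists v; rewrite vT eqxx /=.
  have jsz : j < size (enum (in_nbrs E v)) by rewrite -cardE.
  have hm := mem_nth v jsz; rewrite mem_enum in hm; rewrite hm /=.
  by rewrite index_uniq // enum_uniq.
- move=> [v /andP [vT /andP [/andP [/eqP av uin] idx]]].
  rewrite ltnS leq_eqVlt in idx; case/orP: idx => [/eqP ij | ij].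
    apply/orP; right; apply/mapP; exists v.
      rewrite mem_filter mem_enum vT andbT /indeg cardE -ij index_mem mem_enum //.
    by rewrite av -ij nth_index // mem_enum.
  apply/orP; left; apply/existsP; exists v; by rewrite vT av eqxx uin ij.
Qed.

Lemma run_cons (V : finType) (E : rel V) (k r : nat) (c : config V k) m s :
  run E r c (m :: s) =
  match step E c m with
  | Some c' => if valid_config r c' then run E r c' s else None
  | None => None end.
Proof. by []. Qed.

Lemma step_load (V : finType) (E : rel V) (k : nat) R B (l : seq ('I_k * V)) :
  step E (R, B) (LoadR2 l) =
  if uniq (map fst l) && all (fun p => p.2 \in B) l then Some (add_red R l, B) else None.
Proof. by []. Qed.

Lemma step_comp (V : finType) (E : rel V) (k : nat) R B (l : seq ('I_k * V)) :
  step E (R, B) (CompR3 l) =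
  if uniq (map fst l) && all (fun p => in_nbrs E p.2 \subset R p.1) l
  then Some (add_red R l, B) else None.
Proof. by []. Qed.

Lemma step_save (V : finType) (E : rel V) (k : nat) R B (l : seq ('I_k * V)) :
  step E (R, B) (SaveR1 l) =
  if uniq (map fst l) && all (fun p => p.2 \in R p.1) l
  then Some (R, B :|: [set v | v \in map snd l]) else None.
Proof. by []. Qed.

Lemma load_run (V : finType) (E : rel V) (k r : nat) (Tt : {set V}) (a : V -> 'I_k) (B : {set V}) (j m : nat) :
  {in Tt &, injective a} -> max_indeg E + 1 <= r ->
  (forall v, v \in Tt -> in_nbrs E v \subset B) ->
  run E r (Rload E Tt a j, B)
    [seq LoadR2 [seq (a v, nth v (enum (in_nbrs E v)) j) | v <- enum Tt & j < indeg E v]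
    | j <- iota j m] = Some (Rload E Tt a (j + m), B).
Proof.
move=> inj hr prec.
elim: m j => [|m IH] j; first by rewrite addn0.
rewrite [iota _ _]/= map_cons run_cons step_load.
have -> : uniq [seq x.1 | x <- [seq (a v, nth v (enum (in_nbrs E v)) j)
                                | v <- enum Tt & j < indeg E v]].
  rewrite -map_comp map_inj_in_uniq; first by apply: filter_uniq; apply: enum_uniq.
  move=> x y; rewrite mem_filter => /andP [_ xT]; rewrite mem_filter => /andP [_ yT].
  by apply: inj; rewrite -mem_enum.
have -> : all (fun p => p.2 \in B) [seq (a v, nth v (enum (in_nbrs E v)) j)
                                | v <- enum Tt & j < indeg E v].
  apply/allP => [[p u]] /mapP [v]; rewrite mem_filter mem_enum => /andP [jv vT] [_ ->].
  have jsz : j < size (enum (in_nbrs E v)) by rewrite -cardE.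
  have hm := mem_nth v jsz; rewrite mem_enum in hm.
  exact: (subsetP (prec v vT)).
rewrite andTb add_red_load valid_Rload // IH; by rewrite addSnnS.
Qed.

Lemma add_red_comp (V : finType) (E : rel V) (k : nat) (Tt : {set V}) (a : V -> 'I_k) :
  add_red (Rload E Tt a (\max_(v in Tt) indeg E v)) [seq (a v, v) | v <- enum Tt]
  = Rfin E a (enum Tt).
Proof.
apply/ffunP => p; rewrite /add_red /Rload /Rfin !ffunE; apply/setP => u; rewrite !inE.
apply/idP/hasP.
- case/orP => [/existsP [v /andP [vT /andP [/andP [av uin] idx]]]|].
    by exists v; rewrite ?mem_enum // av in_setU1 uin orbT.
  case/mapP => v; rewrite mem_enum => vT [-> ->].
  by exists v; rewrite ?mem_enum // eqxx in_setU1 eqxx.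
- move=> [v]; rewrite mem_enum => vT /andP [/eqP av]; rewrite in_setU1 => /orP [/eqP uv|uin].
    apply/orP; right; apply/mapP; exists v; by rewrite ?mem_enum // uv av.
  apply/orP; left; apply/existsP; exists v; rewrite vT av eqxx uin /=.
  apply: leq_trans (leq_bigmax_cond _ vT).
  by rewrite /indeg cardE index_mem mem_enum.
Qed.

Lemma del_all (V : finType) (E : rel V) (k r : nat) (Tt : {set V}) (a : V -> 'I_k)
   (B : {set V}) (X : seq V) :
  {in Tt &, injective a} -> max_indeg E + 1 <= r ->
  uniq X -> {subset X <= Tt} ->
  run E r (Rfin E a X, B)
    (flatten [seq [seq DelRedR4 (a v) u | u <- enum (v |: in_nbrs E v)] | v <- X])
  = Some (Rfin E a [::], B).
Proof.
move=> inj hr.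
elim: X => [|v X IH] //= /andP [vX uX] sub.
rewrite run_cat del_run ?enum_uniq //; last first.
- exact: (@valid_Rfin V E k r Tt a B (v :: X) inj hr sub).
- move=> u hu; rewrite mem_enum in hu; by rewrite /Rfin ffunE in_set /= eqxx hu.
have -> : [ffun i => if i == a v then Rfin E a (v :: X) i :\: [set x in enum (v |: in_nbrs E v)]
                     else Rfin E a (v :: X) i] = Rfin E a X.
  apply/ffunP => i; rewrite /Rfin !ffunE; case: eqP => [->|ne].
    apply/setP => u; rewrite !inE mem_enum /=.
    have hX : has (fun w => (a w == a v) && (u \in w |: in_nbrs E w)) X = false.
      apply/negbTE/hasPn => w wX; apply/negP => /andP [/eqP aw _].
      have ew : w = v by apply: inj => //; [apply: sub; rewrite inE wX orbT | apply: sub; rewrite inE eqxx].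
      by rewrite -ew wX in vX.
    rewrite eqxx /=; case: (u \in v |: in_nbrs E v) => //=; exact/esym/hX.
  apply/setP => u; rewrite !inE /=.
  have -> : (a v == i) = false by apply/eqP => ai; apply: ne.
  by [].
apply: IH => // w wX; apply: sub; by rewrite inE wX orbT.
Qed.

Lemma phase_run (V : finType) (E : rel V) (k r : nat) (T : seq {set V})
  (asg : nat -> V -> 'I_k) (t : nat) (B : {set V}) :
  {in nth set0 T t &, injective (asg t)} -> max_indeg E + 1 <= r ->
  (forall v, v \in nth set0 T t -> in_nbrs E v \subset B) ->
  run E r ([ffun => set0], B) (greedy_phase E T asg t)
  = Some ([ffun => set0], B :|: nth set0 T t).
Proof.
move=> inj hr prec; rewrite /greedy_phase; cbv zeta.
set Tt := nth set0 T t in inj prec *; set a := asg t in inj *.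
have -> : [ffun => set0] = Rload E Tt a 0.
  apply/ffunP => p; rewrite /Rload !ffunE; apply/setP => u; rewrite !inE.
  apply/esym/existsP => [[v]]; by rewrite ltn0 !andbF.
rewrite run_cat load_run // add0n !cat_cons run_cons step_comp.
have -> : uniq [seq x.1 | x <- [seq (a v, v) | v <- enum Tt]].
  rewrite -map_comp map_inj_in_uniq; first by apply: enum_uniq.
  by move=> x y; rewrite !mem_enum; exact: inj.
have -> : all (fun p => in_nbrs E p.2 \subset Rload E Tt a (\max_(v in Tt) indeg E v) p.1)
            [seq (a v, v) | v <- enum Tt].
  apply/allP => [[p u]] /mapP [v]; rewrite mem_enum => vT [-> ->] /=.
  apply/subsetP => w win; rewrite /Rload ffunE inE; apply/existsP; exists v.
  rewrite vT eqxx win /=; apply: leq_trans (leq_bigmax_cond _ vT).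
  by rewrite /indeg cardE index_mem mem_enum.
rewrite andTb add_red_comp (@valid_Rfin V E k r Tt a B (enum Tt) inj hr); last first.
  by move=> x; rewrite mem_enum.
rewrite run_cons step_save.
have -> : uniq [seq x.1 | x <- [seq (a v, v) | v <- enum Tt]].
  rewrite -map_comp map_inj_in_uniq; first by apply: enum_uniq.
  by move=> x y; rewrite !mem_enum; exact: inj.
have -> : all (fun p => p.2 \in Rfin E a (enum Tt) p.1) [seq (a v, v) | v <- enum Tt].
  apply/allP => [[p u]] /mapP [v]; rewrite mem_enum => vT [-> ->] /=.
  rewrite /Rfin ffunE in_set; apply/hasP; exists v; first by rewrite mem_enum.
  by rewrite eqxx in_setU1 eqxx.
rewrite andTb (@valid_Rfin V E k r Tt a _ (enum Tt) inj hr); last first.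
  by move=> x; rewrite mem_enum.
rewrite (@del_all V E k r Tt a _ (enum Tt) inj hr (enum_uniq _)); last first.
  by move=> x; rewrite mem_enum.
congr (Some (_, _)).
  apply/ffunP => p; rewrite /Rfin /Rload !ffunE; apply/setP => u; rewrite !inE /=.
  apply/esym/existsP => [[v]]; by rewrite ltn0 !andbF.
apply/setP => u; rewrite !inE; congr (_ || _).
apply/mapP/idP => [[x]|uT].
  by move=> /mapP [v]; rewrite mem_enum => vT -> ->.
by exists (a u, u); rewrite // map_f // mem_enum.
Qed.

Lemma sched_before_S (V : finType) (T : seq {set V}) t :
  sched_before T t.+1 = sched_before T t :|: nth set0 T t.
Proof. by rewrite /sched_before big_ord_recr. Qed.

Lemma sched_before0 (V : finType) (T : seq {set V}) : sched_before T 0 = set0.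
Proof. by rewrite /sched_before big_ord0. Qed.

Lemma greedy_run_gen (V : finType) (E : rel V) (k r : nat) (T : seq {set V})
  (asg : nat -> V -> 'I_k) :
  max_indeg E + 1 <= r ->
  (forall t, t < size T -> {in nth set0 T t &, injective (asg t)}) ->
  (forall t, t < size T -> forall v, v \in nth set0 T t ->
     in_nbrs E v \subset sched_before T t) ->
  forall m t0, t0 + m <= size T ->
  run E r ([ffun => set0], sched_before T t0)
     (flatten [seq greedy_phase E T asg t | t <- iota t0 m])
  = Some ([ffun => set0], sched_before T (t0 + m)).
Proof.
move=> hr inj prec; elim=> [|m IH] t0 hm; first by rewrite addn0.
rewrite [iota _ _]/= map_cons [flatten _]/= run_cat phase_run //; last first.
- by apply: prec; lia.
- by apply: inj; lia.
rewrite -sched_before_S IH; last lia.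
by rewrite addSnnS.
Qed.

Lemma greedy_valid (V : finType) (E : rel V) (k r : nat) (T : seq {set V})
  (asg : nat -> V -> 'I_k) :
  max_indeg E + 1 <= r ->
  non_idle_greedy_schedule E k T ->
  (forall t, t < size T -> {in nth set0 T t &, injective (asg t)}) ->
  pebbling_strategy E r (greedy_strategy E T asg).
Proof.
move=> hr [cover [_ [_ [_ [prec _]]]]] inj.
rewrite /pebbling_strategy /greedy_strategy /init_config.
have := greedy_run_gen hr inj prec (m := size T) (t0 := 0) (leqnn _).
rewrite sched_before0 add0n => -> /=.
apply/forallP => v; apply/implyP => _; apply/orP; left.
have [t ht vt] := cover v.
by apply/bigcupP; exists (Ordinal ht).
Qed.

Lemma sum_const_seq (I : Type) (s : seq I) (c : nat) : \sum_(x <- s) c = size s * c.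
Proof. elim: s => [|x s IH]; by rewrite ?big_nil ?big_cons ?IH //= mulSn. Qed.

Lemma sum_le_seq (I : Type) (s : seq I) (F : I -> nat) (c : nat) :
  (forall x, F x <= c) -> \sum_(x <- s) F x <= size s * c.
Proof.
move=> H; elim: s => [|x s IH]; rewrite ?big_nil ?big_cons //= mulSn.
exact: leq_add.
Qed.

Lemma del_cost0 (V : finType) (k g : nat) (L : seq V) (a : V -> 'I_k) (f : V -> seq V) :
  \sum_(m <- flatten [seq [seq DelRedR4 (a v) u | u <- f v] | v <- L]) move_cost g m = 0.
Proof.
elim: L => [|v L IH]; first by rewrite big_nil.
have fc : forall (A : Type) (x : seq A) s, flatten (x :: s) = x ++ flatten s by [].
rewrite map_cons fc big_cat IH Monoid.mulm1 big_map.
elim: (f v) => [|u us IHu]; by rewrite ?big_nil ?big_cons.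
Qed.

Lemma phase_cost (V : finType) (E : rel V) (k g : nat) (T : seq {set V})
  (asg : nat -> V -> 'I_k) t :
  \sum_(m <- greedy_phase E T asg t) move_cost g m <= g * (max_indeg E + 1) + 1.
Proof.
rewrite /greedy_phase; cbv zeta.
rewrite !big_cat /= !big_cons big_nil big_map sum_const_seq size_iota /=.
have h0 : \sum_(i <- [seq DelRedR4 (asg t v) u | v <- enum (nth set0 T t),
     u <- enum (v |: in_nbrs E v)]) move_cost g i = 0.
  exact: del_cost0.
rewrite h0.
have : \max_(v in nth set0 T t) indeg E v <= max_indeg E.
  by apply/bigmax_leqP => v _; rewrite /max_indeg (bigD1 v) //= leq_maxl.
move=> h; nia.
Qed.

Lemma greedy_cost (V : finType) (E : rel V) (k g : nat) (T : seq {set V})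
  (asg : nat -> V -> 'I_k) :
  strategy_cost g (greedy_strategy E T asg) <= size T * (g * (max_indeg E + 1) + 1).
Proof.
rewrite /strategy_cost /greedy_strategy big_flatten /= big_map.
have := sum_le_seq (iota 0 (size T)) (fun t => phase_cost E g T asg t).
rewrite size_iota => h; exact: h.
Qed.

Definition comps (V : finType) (k : nat) (S : seq (move V k)) : seq (seq ('I_k * V)) :=
  pmap (fun m => if m is CompR3 l then Some l else None) S.

Definition cs (V : finType) (k : nat) (ls : seq (seq ('I_k * V))) (i : nat) : {set V} :=
  [set v | has (fun l => v \in map snd l) (take i ls)].

Definition pebbled (V : finType) (k : nat) (c : config V k) (v : V) : bool :=
  (v \in c.2) || [exists j, v \in c.1 j].

Lemma cs0 (V : finType) (k : nat) (ls : seq (seq ('I_k * V))) : cs ls 0 = set0.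
Proof. by apply/setP => v; rewrite !inE take0. Qed.

Lemma csS (V : finType) (k : nat) l (ls : seq (seq ('I_k * V))) i :
  cs (l :: ls) i.+1 = [set v | v \in map snd l] :|: cs ls i.
Proof. by apply/setP => v; rewrite !inE. Qed.

Lemma inv_run (V : finType) (E : rel V) (k r : nat) (S : seq (move V k)) :
  forall (c c' : config V k) (X : {set V}),
  run E r c S = Some c' -> (forall v, pebbled c v -> v \in X) ->
  (forall i, i < size (comps S) ->
     uniq (map fst (nth [::] (comps S) i)) /\
     (forall pv, pv \in nth [::] (comps S) i -> in_nbrs E pv.2 \subset X :|: cs (comps S) i))
  /\ (forall v, pebbled c' v -> v \in X :|: cs (comps S) (size (comps S))).
Proof.
elim: S => [|m S IH] [R B] c' X.
  move=> [<-] H; split => [i //|v]; rewrite cs0 setU0; exact: H.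
rewrite run_cons.
case hs : (step E (R, B) m) => [c1|] //; case: ifP => // _ hrun hX.
case: m hs => [l|l|l|j u|u] /= hs.
- move: hs; case: ifP => // /andP [_ hall] [ec1]; subst c1.
  apply: (IH _ _ X hrun) => v; rewrite /pebbled /= inE => /orP [/orP [vB|vl]|vR].
    by apply: hX; rewrite /pebbled vB.
    rewrite inE in vl; move: vl => /mapP [[p w] pl ->] /=; apply: hX; apply/orP; right; apply/existsP; exists p.
    by have := allP hall _ pl.
  by apply: hX; rewrite /pebbled vR orbT.
- move: hs; case: ifP => // /andP [_ hall] [ec1]; subst c1.
  apply: (IH _ _ X hrun) => v; rewrite /pebbled /= => /orP [vB|/existsP [p]].
    by apply: hX; rewrite /pebbled vB.
  rewrite /add_red ffunE !inE => /orP [vR|vl].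
    by apply: hX; apply/orP; right; apply/existsP; exists p.
  by apply: hX; rewrite /pebbled (allP hall _ vl).
- move: hs; case: ifP => // /andP [huq hall] [ec1]; subst c1.
  have hX' : forall v, pebbled (add_red R l, B) v -> v \in X :|: [set v | v \in map snd l].
    move=> v; rewrite /pebbled /= => /orP [vB|/existsP [p]].
      by rewrite inE hX // /pebbled vB.
    rewrite /add_red ffunE !inE => /orP [vR|vl].
      by rewrite hX //; apply/orP; right; apply/existsP; exists p.
    by apply/orP; right; apply/mapP; exists (p, v).
  have [IH1 IH2] := IH _ _ _ hrun hX'.
  split.
    case=> [|i] hi /=.
      split => // pv pvl; rewrite cs0 setU0; apply: subset_trans (allP hall _ pvl) _.
      apply/subsetP => w wR; apply: hX; apply/orP; right; apply/existsP; by exists pv.1.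
    have [h1 h2] := IH1 i hi; split => // pv pvl.
    by rewrite csS setUA; apply: h2.
  by move=> v pv; rewrite csS setUA; apply: IH2.
- move: hs; case: ifP => // uR [ec1]; subst c1.
  apply: (IH _ _ X hrun) => v; rewrite /pebbled /= => /orP [vB|/existsP [p]].
    by apply: hX; rewrite /pebbled vB.
  rewrite ffunE; case: eqP => _ vR; last first.
    by apply: hX; apply/orP; right; apply/existsP; exists p.
  apply: hX; apply/orP; right; apply/existsP; exists p.
  by move: vR; rewrite inE => /andP [].
- move: hs; case: ifP => // uB [ec1]; subst c1.
  apply: (IH _ _ X hrun) => v; rewrite /pebbled /= => /orP [vB|vR].
    by apply: hX; move: vB; rewrite inE => /andP [_ vB]; rewrite /pebbled vB.
  by apply: hX; rewrite /pebbled vR orbT.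
Qed.

Lemma comps_props (V : finType) (E : rel V) (k r : nat) (S : seq (move V k)) :
  pebbling_strategy E r S ->
  (forall i, i < size (comps S) ->
     uniq (map fst (nth [::] (comps S) i)) /\
     (forall pv, pv \in nth [::] (comps S) i -> in_nbrs E pv.2 \subset cs (comps S) i))
  /\ (forall v, is_sink E v -> has (fun l => v \in map snd l) (comps S)).
Proof.
rewrite /pebbling_strategy; case hr : (run E r (init_config V k) S) => [c'|] // ht.
have h0 : forall v, pebbled (init_config V k) v -> v \in (set0 : {set V}).
  by move=> v; rewrite /pebbled /init_config /= inE => /existsP [j]; rewrite ffunE inE.
have [H1 H2] := inv_run hr h0.
split.
  move=> i hi; have [u1 u2] := H1 _ hi; split => // pv hpv.
  by rewrite -[cs _ _]set0U; apply: u2.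
move=> v sv; move/forallP: ht => /(_ v); rewrite sv /= => hv.
by have := H2 v hv; rewrite set0U inE take_size.
Qed.

Lemma has_take_has (T : Type) (p : pred T) (s : seq T) i : has p (take i s) -> has p s.
Proof. by move=> h; rewrite -(cat_take_drop i s) has_cat h. Qed.

Lemma all_computed (V : finType) (E : rel V) (k : nat) (T : seq {set V})
   (ls : seq (seq ('I_k * V))) :
  non_idle_greedy_schedule E k T ->
  (forall i, i < size ls -> forall pv, pv \in nth [::] ls i -> in_nbrs E pv.2 \subset cs ls i) ->
  (forall v, is_sink E v -> has (fun l => v \in map snd l) ls) ->
  forall v, has (fun l => v \in map snd l) ls.
Proof.
move=> [cover [disj [_ [_ [prec _]]]]] H1 H2.
suff H : forall n t, size T - t <= n -> t < size T -> forall v, v \in nth set0 T t ->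
    has (fun l => v \in map snd l) ls.
  by move=> v; have [t ht vt] := cover v; exact: (H _ t (leqnn _) ht v vt).
elim=> [|n IH] t hn ht v vt; first lia.
case sv: (is_sink E v); first exact: H2.
move/negbT: sv; rewrite /is_sink negb_forall => /existsP [w]; rewrite negbK => Evw.
have [t' ht' wt'] := cover w.
have vin : v \in in_nbrs E w by rewrite inE.
have := subsetP (prec t' ht' w wt') v vin; rewrite /sched_before => /bigcupP [i _ vi].
have it : nat_of_ord i = t.
  apply/eqP; apply/negPn/negP => ne.
  have hi : nat_of_ord i < size T := ltn_trans (ltn_ord i) ht'.
  by rewrite (disjointFr (disj _ _ hi ht ne) vi) in vt.
have tt' : t < t' by rewrite -it.
have hw := IH t' ltac:(lia) ht' w wt'.
set j := find (fun l => w \in map snd l) ls.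
have hj : j < size ls by rewrite -has_find.
have := nth_find [::] hw; rewrite -/j => /mapP [pv pvin ewpv].
have := subsetP (H1 j hj pv pvin) v; rewrite -ewpv => /(_ vin).
by rewrite inE; apply: has_take_has.
Qed.

Definition fidx (V : finType) (k : nat) (ls : seq (seq ('I_k * V))) (v : V) : nat :=
  find (fun l => v \in map snd l) ls.

Lemma f_edge (V : finType) (E : rel V) (k : nat) (ls : seq (seq ('I_k * V))) u v :
  (forall i, i < size ls -> forall pv, pv \in nth [::] ls i -> in_nbrs E pv.2 \subset cs ls i) ->
  has (fun l => v \in map snd l) ls -> E u v -> fidx ls u < fidx ls v.
Proof.
move=> H1 hv Euv.
have hj : fidx ls v < size ls by rewrite -has_find.
have := nth_find [::] hv; rewrite -/(fidx ls v) => /mapP [pv pvin evpv].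
have uin : u \in in_nbrs E v by rewrite inE.
have := subsetP (H1 _ hj pv pvin) u; rewrite -evpv => /(_ uin).
rewrite inE; exact: find_ltn.
Qed.

Lemma size_flat_le (V : finType) (k : nat) (ls : seq (seq ('I_k * V))) :
  (forall l, l \in ls -> size l <= k) -> size (flatten (map (map snd) ls)) <= size ls * k.
Proof.
elim: ls => [|l ls IH] //= H.
rewrite size_cat size_map mulSn; apply: leq_add; first by apply: H; rewrite mem_head.
by apply: IH => l' hl'; apply: H; rewrite inE hl' orbT.
Qed.

Lemma count_bound (V : finType) (k : nat) (ls : seq (seq ('I_k * V))) :
  (forall i, i < size ls -> uniq (map fst (nth [::] ls i))) ->
  (forall v, has (fun l => v \in map snd l) ls) ->
  #|V| <= k * size ls.
Proof.
move=> hu hall.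
have hsz : forall l, l \in ls -> size l <= k.
  move=> l hl; have := hu (index l ls); rewrite index_mem nth_index // => /(_ hl) h.
  rewrite -(size_map (@fst 'I_k V) l).
  have := @uniq_leq_size _ (map fst l) (enum 'I_k) h (fun x _ => mem_enum _ x).
  by rewrite size_enum_ord.
apply: leq_trans (_ : size (flatten (map (map snd) ls)) <= _); last first.
  by rewrite mulnC; apply: size_flat_le.
apply: leq_trans (card_size _).
apply: subset_leq_card; apply/subsetP => v _.
have /hasP [l hl vl] := hall v.
by apply/flattenP; exists (map snd l) => //; apply: map_f.
Qed.

Lemma comps_cost (V : finType) (k g : nat) (S : seq (move V k)) :
  size (comps S) <= strategy_cost g S.
Proof.
rewrite /strategy_cost; elim: S => [|m S IH]; first by rewrite big_nil.
rewrite big_cons; case: m => [l|l|l|j u|u] /=; try (apply: leq_trans IH _; apply: leq_addl).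
by rewrite add1n ltnS.
Qed.

Lemma sched_bound (V : finType) (E : rel V) (k : nat) (T : seq {set V}) (f : V -> nat) (C : nat) :
  0 < k -> non_idle_greedy_schedule E k T ->
  (forall v, f v < C) -> (forall u v, E u v -> f u < f v) -> #|V| <= k * C ->
  size T <= 2 * C.
Proof.
move=> kp [cover [disj [ne [_ [prec nonidle]]]]] hf hE hcard.
have notin : forall t, t < size T -> forall v, v \in nth set0 T t -> v \notin sched_before T t.
  move=> t ht v vt; apply/bigcupP => [[i _ vi]].
  have hi : nat_of_ord i < size T := ltn_trans (ltn_ord i) ht.
  have ne' : nat_of_ord i != t by rewrite neq_ltn ltn_ord.
  by rewrite (disjointFr (disj _ _ hi ht ne') vi) in vt.
have inv : forall t, t <= size T -> exists n, [/\ n <= t, n <= C,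
    k * (t - n) <= #|sched_before T t| &
    forall v, v \notin sched_before T t -> n <= f v].
  elim=> [|t IH] ht.
    by exists 0; split => //; rewrite muln0.
  have [n [h1 h2 h3 h4]] := IH (ltnW ht).
  rewrite sched_before_S.
  case: (ltnP #|nth set0 T t| k) => hk.
  - exists n.+1; split.
    + lia.
    + have /set0Pn [v vt] := ne t ht.
      have := h4 v (notin t ht v vt); have := hf v; lia.
    + apply: leq_trans _ (subset_leq_card (subsetUl _ _)).
      by rewrite subSS.
    + move=> v; rewrite inE negb_or => /andP [vs vt].
      have : ~~ (in_nbrs E v \subset sched_before T t).
        apply/negP => hsub; by rewrite (nonidle t ht hk v vs hsub) in vt.
      case/subsetPn => w win wns.
      have := h4 w wns; have := hE w v; rewrite inE in win; move=> /(_ win); lia.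
  - exists n; split => //.
    + lia.
    + rewrite cardsU.
      have -> : sched_before T t :&: nth set0 T t = set0.
        apply/setP => v; rewrite !inE; apply/negP => /andP [vs vt].
        by rewrite (negbTE (notin t ht v vt)) in vs.
      rewrite cards0 subn0 subSn // mulnS; lia.
    + by move=> v; rewrite inE negb_or => /andP [vs _]; apply: h4.
have [n [h1 h2 h3 _]] := inv (size T) (leqnn _).
have e : sched_before T (size T) = setT.
  apply/setP => v; rewrite inE; have [t ht vt] := cover v.
  by apply/bigcupP; exists (Ordinal ht).
rewrite e cardsT in h3.
have : k * (size T - n) <= k * C := leq_trans h3 hcard.
rewrite leq_pmul2l // => h; lia.
Qed.

Theorem lemma3 (V : finType) (E : rel V) (k g r : nat)
  (T : seq {set V}) (asg : nat -> V -> 'I_k) :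
  acyclic E ->
  0 < k -> 0 < g -> 0 < r ->
  max_indeg E + 1 <= r ->
  non_idle_greedy_schedule E k T ->
  (forall t, t < size T -> {in nth set0 T t &, injective (asg t)}) ->
  pebbling_strategy E r (greedy_strategy E T asg) /\
  (forall S : seq (move V k), pebbling_strategy E r S ->
     strategy_cost g (greedy_strategy E T asg)
       <= 2 * (g * (max_indeg E + 1) + 1) * strategy_cost g S).
Proof.
move=> _ kp gp rp hr hT inj; split; first exact: greedy_valid.
move=> S hS.
have [H1 H2] := comps_props hS.
have H1b : forall i, i < size (comps S) -> forall pv, pv \in nth [::] (comps S) i ->
    in_nbrs E pv.2 \subset cs (comps S) i by move=> i hi; exact: (H1 i hi).2.
have hall := all_computed hT H1b H2.
have hcard : #|V| <= k * size (comps S).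
  by apply: count_bound => // i hi; exact: (H1 i hi).1.
have hs : size T <= 2 * size (comps S).
  apply: (sched_bound (f := fidx (comps S)) kp hT) => // [v|u v Euv].
    by rewrite /fidx -has_find.
  exact: f_edge H1b (hall v) Euv.
have hc := comps_cost g S.
apply: leq_trans (greedy_cost E g T asg) _.
set X := g * (max_indeg E + 1) + 1.
rewrite -mulnA [X * _]mulnC mulnA.
apply: leq_mul => //; lia.
Qed.
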